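(* Let $n\geq2$, $m<0$, and let $\langle \sigma_{a_1}\cdots\sigma_{a_n}\rangle^{(m),+}$ and $\langle \sigma_{a_1}\cdots\sigma_{a_n}\rangle^{(-m),\mathtt{f}}$ be the full-plane scaling functions, and $\mathcal{C}=2^{1/6}e^{3\zeta'(-1)/2}$. Then $\mathcal{C}^n\langle \sigma_{a_1}\cdots\sigma_{a_n}\rangle^{(m),+}$ and $\mathcal{C}^n\langle \sigma_{a_1}\cdots\sigma_{a_n}\rangle^{(-m),\mathtt{f}}$ are rotationally invariant: for every $\phi\in\mathbb{R}$ and distinct $a_1,\ldots,a_n\in\mathbb{C}$, their values at $(e^{i\phi}a_1,\ldots,e^{i\phi}a_n)$ equal their values at $(a_1,\ldots,a_n)$.
   Context: Setting: $\Lambda=\Lambda_\delta$ is a $\delta$-isoradial lattice (every face inscribed in a circle of radius $\delta$; its dual $\Lambda^*$ is also $\delta$-isoradial), whose rhombus half-angles $\bar\theta_e\in(0,\pi/2)$ at primal vertices are uniformly bounded away from $0,\pi/2$. The Z-invariant Ising model with nome $q$ (elliptic modulus $k$, quarter period $K(k)$) assigns $\pm1$ spins to faces with weight $\prod_{e\in L(\sigma)}\tan(\hat\theta_e/2)$, $\sin\hat\theta_e=\operatorname{sn}(\tfrac{2K(k)}{\pi}\bar\theta_e|k)$, $L(\sigma)$ the set of edges separating unequal spins; $+$ denotes plus and $\mathtt{f}$ free boundary conditions, infinite-lattice expectations being infinite-volume limits. With nome $q=m\delta/2$ on $\Lambda$ (plus b.c.) and nome $-m\delta/2$ on $\Lambda^*$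 (free b.c.), the full-plane scaling functions are the functions for which, as $\delta\downarrow0$, $\delta^{-n/8}\mathbb{E}^{(m),+}_{\Lambda}[\sigma_{a_1}\cdots\sigma_{a_n}]\to \mathcal{C}^n\langle \sigma_{a_1}\cdots\sigma_{a_n}\rangle^{(m),+}$ and $\delta^{-n/8}\mathbb{E}^{(-m),\mathtt{f}}_{\Lambda^*}[\sigma_{a_1}\cdots\sigma_{a_n}]\to \mathcal{C}^n\langle \sigma_{a_1}\cdots\sigma_{a_n}\rangle^{(-m),\mathtt{f}}$, where $\sigma_a$ is the spin at a face near $a$. *)

(* Defs.v *)
From HB Require Import structures.
From mathcomp Require Import all_boot all_order all_algebra finmap.
From mathcomp Require Import all_classical all_reals all_analysis.
Set Implicit Arguments. Unset Strict Implicit. Unset Printing Implicit Defensive.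
Import Order.TTheory GRing.Theory Num.Theory numFieldNormedType.Exports.
Local Open Scope classical_set_scope.
Local Open Scope ring_scope.

Section Defs.
Variable R : realType.

(* points of the plane C = R^2 *)
Definition pt := (R * R)%type.
Definition padd (a b : pt) : pt := (a.1 + b.1, a.2 + b.2).
Definition psub (a b : pt) : pt := (a.1 - b.1, a.2 - b.2).
Definition pscale (s : R) (a : pt) : pt := (s * a.1, s * a.2).
Definition pdot (a b : pt) : R := a.1 * b.1 + a.2 * b.2.
Definition pnorm (a : pt) : R := Num.sqrt (pdot a a).
Definition pdist (a b : pt) : R := pnorm (psub a b).
(* multiplication by e^{i phi} *)
Definition prot (phi : R) (a : pt) : pt :=
  (cos phi * a.1 - sin phi * a.2, sin phi * a.1 + cos phi * a.2).
(* lexicographic strict order, used only to pick canonical representatives *)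
Definition plex (a b : pt) : bool := (a.1 < b.1) || ((a.1 == b.1) && (a.2 < b.2)).

(* A rhombus is encoded by a triple ((u, w), w') : u a primal vertex, w, w' the
   two dual vertices; the other primal vertex is u' = w + w' - u.  The edge of
   Lambda is (u,u'), the dual edge of Lambda^* is (w,w'). *)
Definition rhomb := (pt * pt * pt)%type.
Definition rh_u (r : rhomb) : pt := r.1.1.
Definition rh_w (r : rhomb) : pt := r.1.2.
Definition rh_w' (r : rhomb) : pt := r.2.
Definition rh_u' (r : rhomb) : pt := psub (padd (rh_w r) (rh_w' r)) (rh_u r).

Definition rh_hull (r : rhomb) : set pt :=
  [set z | exists s t, 0 <= s <= 1 /\ 0 <= t <= 1 /\
     z = padd (rh_u r) (padd (pscale s (psub (rh_w r) (rh_u r)))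
                             (pscale t (psub (rh_w' r) (rh_u r))))].
Definition rh_int (r : rhomb) : set pt :=
  [set z | exists s t, 0 < s < 1 /\ 0 < t < 1 /\
     z = padd (rh_u r) (padd (pscale s (psub (rh_w r) (rh_u r)))
                             (pscale t (psub (rh_w' r) (rh_u r))))].
Definition rh_verts (r : rhomb) : set pt :=
  [set rh_u r; rh_w r; rh_u' r; rh_w' r].

Definition half_angle (r : rhomb) : R :=
  acos (pdot (psub (rh_w r) (rh_u r)) (psub (rh_w' r) (rh_u r)) /
        (pnorm (psub (rh_w r) (rh_u r)) * pnorm (psub (rh_w' r) (rh_u r)))) / 2.

Definition primal_v (L : set rhomb) : set pt := [set u | exists r, L r /\ rh_u r = u].
Definition dual_v (L : set rhomb) : set pt := [set w | exists r, L r /\ rh_w r = w].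

(* L is (the rhombic tiling of) a delta-isoradial lattice Lambda: an
   edge-to-edge tiling of the plane by rhombi of side delta, whose vertices are
   bicoloured into primal vertices (Lambda) and dual vertices (Lambda^*, the
   circumcentres of the faces of Lambda).  Every rhombus is listed under all
   four of its representations. *)
Definition isoradial (delta : R) (L : set rhomb) : Prop :=
  [/\ (forall r, L r -> pdist (rh_w r) (rh_u r) = delta /\
                       pdist (rh_w' r) (rh_u r) = delta /\ rh_w r <> rh_w' r /\
                       rh_u r <> rh_u' r),
      (forall r, L r -> L ((rh_u r, rh_w' r), rh_w r) /\ L ((rh_u' r, rh_w r), rh_w' r)),
      primal_v L `&` dual_v L = set0 /\
      (forall z, exists r, L r /\ rh_hull r z),
      (forall r1 r2 z, L r1 -> L r2 -> rh_int r1 z -> rh_int r2 z -> rh_hull r1 = rh_hull r2) &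
      (forall r1 r2 v, L r1 -> L r2 -> rh_verts r1 v -> rh_hull r2 v -> rh_verts r2 v)].

Definition angles_bounded (eta : R) (L : set rhomb) : Prop :=
  forall r, L r -> eta <= half_angle r <= pi / 2 - eta.

(* one canonical representative per rhombus (= per edge of Lambda) *)
Definition canon (L : set rhomb) : set rhomb :=
  [set r | L r /\ plex (rh_u r) (rh_u' r) /\ plex (rh_w r) (rh_w' r)].

Definition seriesR (u : nat -> R) : R := limn (fun N => \sum_(j < N) u j).
(* theta_3(q) and theta_2(q)/q^{1/4} = 2 sum_{j>=0} q^{j(j+1)} *)
Definition theta3 (q : R) : R := 1 + 2 * seriesR (fun j => q ^+ (j.+1 * j.+1)).
Definition theta2r (q : R) : R := 2 * seriesR (fun j => q ^+ (j * j.+1)).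
(* modulus: k^2 = theta_2(q)^4 / theta_3(q)^4 *)
Definition ksq (q : R) : R := q * theta2r q ^+ 4 / theta3 q ^+ 4.
Definition ellF (q phi : R) : R :=
  \int[lebesgue_measure]_(t in `[0, phi]) (Num.sqrt (1 - ksq q * sin t ^+ 2))^-1.
Definition ellK (q : R) : R := ellF q (pi / 2).
(* Jacobi amplitude and sn(u | k) for u >= 0 *)
Definition jam (q u : R) : R := xget 0 [set phi | 0 <= phi /\ ellF q phi = u].
Definition jsn (q u : R) : R := sin (jam q u).
(* Z-invariant weight tan(theta_hat/2), sin theta_hat = sn(2K thetabar/pi | k) *)
Definition zweight (q thetabar : R) : R :=
  tan (asin (jsn q (2 * ellK q * thetabar / pi)) / 2).

Definition spin (S : {fset pt}) (x : pt) : R := if x \in S then -1 else 1.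

(* Lambda, plus boundary conditions: spins on faces of Lambda (dual vertices)
   in the ball of radius N, + outside; S = set of minus spins *)
Definition ballD (L : set rhomb) (N : R) : {fset pt} :=
  fset_set [set w | dual_v L w /\ pnorm w <= N].
Definition ballP (L : set rhomb) (N : R) : {fset pt} :=
  fset_set [set u | primal_v L u /\ pnorm u <= N].

Definition Wplus (q : R) (L : set rhomb) (S : {fset pt}) : R :=
  \big[*%R/1]_(r \in [set r | canon L r /\ ((rh_w r \in S) != (rh_w' r \in S))])
     zweight q (half_angle r).
Definition Eplus_fin (q : R) (L : set rhomb) (N : R) (xs : seq pt) : R :=
  (\sum_(S <- fpowerset (ballD L N)) Wplus q L S * \prod_(x <- xs) spin S x) /
  (\sum_(S <- fpowerset (ballD L N)) Wplus q L S).
Definition Eplus (q : R) (L : set rhomb) (xs : seq pt) : R :=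
  limn (fun N : nat => Eplus_fin q L N%:R xs).

(* Lambda^*, free boundary conditions: spins on faces of Lambda^* (primal
   vertices) in the ball of radius N; only edges of Lambda^* inside count.
   The half-angle of the rhombus at the dual vertex is pi/2 - thetabar. *)
Definition Wfree (q : R) (L : set rhomb) (D S : {fset pt}) : R :=
  \big[*%R/1]_(r \in [set r | canon L r /\ rh_u r \in D /\ rh_u' r \in D /\
                        ((rh_u r \in S) != (rh_u' r \in S))])
     zweight q (pi / 2 - half_angle r).
Definition Efree_fin (q : R) (L : set rhomb) (N : R) (xs : seq pt) : R :=
  (\sum_(S <- fpowerset (ballP L N)) Wfree q L (ballP L N) S * \prod_(x <- xs) spin S x) /
  (\sum_(S <- fpowerset (ballP L N)) Wfree q L (ballP L N) S).
Definition Efree (q : R) (L : set rhomb) (xs : seq pt) : R :=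
  limn (fun N : nat => Efree_fin q L N%:R xs).

(* Riemann zeta via Hasse's globally convergent series (valid for s <> 1) *)
Definition zetaR (s : R) : R :=
  (1 - 2 `^ (1 - s))^-1 *
  seriesR (fun j => 2 `^ (- (j.+1)%:R) *
     \sum_(k < j.+1) ((-1) ^+ k * 'C(j, k)%:R * (k.+1)%:R `^ (- s))).
Definition Cconst : R := 2 `^ (6^-1) * expR (3 / 2 * derive1 zetaR (-1)).

Definition is_scaling_plus (m : R) (n : nat) (f : ('I_n -> pt) -> R) : Prop :=
  forall (eta : R), 0 < eta < pi / 4 ->
  forall (Lam : R -> set rhomb),
    (forall delta, 0 < delta -> isoradial delta (Lam delta) /\ angles_bounded eta (Lam delta)) ->
  forall (a : 'I_n -> pt), injective a ->
  forall (w : R -> 'I_n -> pt),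
    (forall delta i, 0 < delta -> dual_v (Lam delta) (w delta i) /\ pdist (w delta i) (a i) <= delta) ->
  (fun delta => delta `^ (- (n%:R / 8)) *
      Eplus (m * delta / 2) (Lam delta) [seq w delta i | i <- enum 'I_n])
    @ 0^'+ --> Cconst ^+ n * f a.

Definition is_scaling_free (m : R) (n : nat) (f : ('I_n -> pt) -> R) : Prop :=
  forall (eta : R), 0 < eta < pi / 4 ->
  forall (Lam : R -> set rhomb),
    (forall delta, 0 < delta -> isoradial delta (Lam delta) /\ angles_bounded eta (Lam delta)) ->
  forall (a : 'I_n -> pt), injective a ->
  forall (v : R -> 'I_n -> pt),
    (forall delta i, 0 < delta -> primal_v (Lam delta) (v delta i) /\ pdist (v delta i) (a i) <= delta) ->
  (fun delta => delta `^ (- (n%:R / 8)) *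
      Efree (m * delta / 2) (Lam delta) [seq v delta i | i <- enum 'I_n])
    @ 0^'+ --> Cconst ^+ n * f a.

End Defs.

(* Main.v *)
Require Import Defs.
From HB Require Import structures.
From mathcomp Require Import all_boot all_order all_algebra finmap.
From mathcomp Require Import all_classical all_reals all_analysis.
From mathcomp Require Import ring lra zify.
Import Order.TTheory GRing.Theory Num.Theory numFieldNormedType.Exports.
Local Open Scope classical_set_scope.
Local Open Scope ring_scope.
Section Rot.
Context {R : realType}.
Implicit Types (phi : R) (a b : pt R) (r : rhomb R).

Lemma rot_aux (c s x y : R) : c ^+ 2 + s ^+ 2 = 1 ->
  c * (c * x - s * y) + s * (s * x + c * y) = x.
Proof. by move=> h; rewrite -[RHS]mul1r -h; ring. Qed.
Lemma rot_aux2 (c s x y : R) : c ^+ 2 + s ^+ 2 = 1 ->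
  - s * (c * x - s * y) + c * (s * x + c * y) = y.
Proof. by move=> h; rewrite -[RHS]mul1r -h; ring. Qed.

Lemma protK phi a : prot (- phi) (prot phi a) = a.
Proof.
case: a => x y; rewrite /prot /= cosN sinN.
have h := cos2Dsin2 phi.
congr pair.
  by rewrite -[X in _ = X](rot_aux _ _ x y h); ring.
by rewrite -[X in _ = X](rot_aux2 _ _ x y h); ring.
Qed.

Lemma protKV phi a : prot phi (prot (- phi) a) = a.
Proof. by rewrite -{1}(opprK phi) protK. Qed.

Lemma prot_inj phi : injective (prot phi).
Proof. by move=> a b h; rewrite -(protK phi a) h protK. Qed.

Lemma prot_add phi a b : prot phi (padd a b) = padd (prot phi a) (prot phi b).
Proof. by rewrite /prot /padd /=; congr pair; ring. Qed.
Lemma prot_sub phi a b : prot phi (psub a b) = psub (prot phi a) (prot phi b).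
Proof. by rewrite /prot /psub /=; congr pair; ring. Qed.
Lemma prot_scale phi s a : prot phi (pscale s a) = pscale s (prot phi a).
Proof. by rewrite /prot /pscale /=; congr pair; ring. Qed.
Lemma pdot_prot phi a b : pdot (prot phi a) (prot phi b) = pdot a b.
Proof.
rewrite /pdot /prot /=; have h := cos2Dsin2 phi.
transitivity ((cos phi ^+ 2 + sin phi ^+ 2) * (a.1 * b.1 + a.2 * b.2)); first by ring.
by rewrite h mul1r.
Qed.
Lemma pnorm_prot phi a : pnorm (prot phi a) = pnorm a.
Proof. by rewrite /pnorm pdot_prot. Qed.
Lemma pdist_prot phi a b : pdist (prot phi a) (prot phi b) = pdist a b.
Proof. by rewrite /pdist -prot_sub pnorm_prot. Qed.

Definition rotr phi r : rhomb R := ((prot phi (rh_u r), prot phi (rh_w r)), prot phi (rh_w' r)).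
Definition rotL phi (L : set (rhomb R)) : set (rhomb R) := [set r | L (rotr (- phi) r)].

Lemma rotrK phi r : rotr (- phi) (rotr phi r) = r.
Proof. by case: r => [[u w] w']; rewrite /rotr /rh_u /rh_w /rh_w' /= !protK. Qed.
Lemma rotrKV phi r : rotr phi (rotr (- phi) r) = r.
Proof. by rewrite -{1}(opprK phi) rotrK. Qed.

Lemma rh_u'_rotr phi r : rh_u' (rotr phi r) = prot phi (rh_u' r).
Proof. by rewrite /rh_u' prot_sub prot_add. Qed.

Lemma half_angle_rotr phi r : half_angle (rotr phi r) = half_angle r.
Proof. by rewrite /half_angle /rotr /rh_u /rh_w /rh_w' /= -!prot_sub !pdot_prot !pnorm_prot. Qed.

Lemma hull_rotr phi r z : rh_hull (rotr phi r) z <-> rh_hull r (prot (- phi) z).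
Proof.
rewrite /rh_hull /rotr /rh_u /rh_w /rh_w' /=; split.
  move=> [s [t [hs [ht ->]]]]; exists s, t; split => //; split => //.
  by rewrite -!prot_sub -!prot_scale -!prot_add protK.
move=> [s [t [hs [ht h]]]]; exists s, t; split => //; split => //.
by rewrite -!prot_sub -!prot_scale -!prot_add -h protKV.
Qed.

Lemma int_rotr phi r z : rh_int (rotr phi r) z <-> rh_int r (prot (- phi) z).
Proof.
rewrite /rh_int /rotr /rh_u /rh_w /rh_w' /=; split.
  move=> [s [t [hs [ht ->]]]]; exists s, t; split => //; split => //.
  by rewrite -!prot_sub -!prot_scale -!prot_add protK.
move=> [s [t [hs [ht h]]]]; exists s, t; split => //; split => //.
by rewrite -!prot_sub -!prot_scale -!prot_add -h protKV.
Qed.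

Lemma verts_rotr phi r z : rh_verts (rotr phi r) z <-> rh_verts r (prot (- phi) z).
Proof.
rewrite /rh_verts rh_u'_rotr /rotr /rh_u /rh_w /rh_w' /=.
split.
  by case=> [[[->|->]|->]|->]; rewrite protK; [left;left;left|left;left;right|left;right|right].
case=> [[[h|h]|h]|h]; rewrite -h protKV; [left;left;left|left;left;right|left;right|right] => //.
Qed.

Lemma hull_rotr_eq phi r1 r2 : rh_hull r1 = rh_hull r2 -> rh_hull (rotr phi r1) = rh_hull (rotr phi r2).
Proof.
move=> h; apply/funext => z; apply/propext.
by rewrite !hull_rotr h.
Qed.

Lemma primal_rotL phi L z : primal_v (rotL phi L) z <-> primal_v L (prot (- phi) z).
Proof.
split.
  by move=> [r [Lr <-]]; exists (rotr (- phi) r); split.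
move=> [r [Lr h]]; exists (rotr phi r); split; first by rewrite /rotL /= rotrK.
by rewrite /rotr /rh_u /= -/(rh_u r) h protKV.
Qed.
Lemma dual_rotL phi L z : dual_v (rotL phi L) z <-> dual_v L (prot (- phi) z).
Proof.
split.
  by move=> [r [Lr <-]]; exists (rotr (- phi) r); split.
move=> [r [Lr h]]; exists (rotr phi r); split; first by rewrite /rotL /= rotrK.
by rewrite /rotr /rh_w /= -/(rh_w r) h protKV.
Qed.

Lemma rh_u_rotr phi r : rh_u (rotr phi r) = prot phi (rh_u r). Proof. by []. Qed.
Lemma rh_w_rotr phi r : rh_w (rotr phi r) = prot phi (rh_w r). Proof. by []. Qed.
Lemma rh_w'_rotr phi r : rh_w' (rotr phi r) = prot phi (rh_w' r). Proof. by []. Qed.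

Lemma rotL_all phi L (P : rhomb R -> Prop) :
  (forall r0, L r0 -> P (rotr phi r0)) -> forall r, rotL phi L r -> P r.
Proof. by move=> h r Lr; rewrite -(rotrKV phi r); apply: h. Qed.

Lemma isoradial_rotL phi delta L : isoradial delta L -> isoradial delta (rotL phi L).
Proof.
case=> [H1 H2 [H3a H3b] H4 H5]; split.
- apply: rotL_all => r Lr; have := H1 _ Lr.
  rewrite rh_u'_rotr rh_u_rotr rh_w_rotr rh_w'_rotr !pdist_prot.
  move=> [-> [-> [h1 h2]]]; do 2 split => //; split.
    by move=> e; apply: h1; exact: (@prot_inj phi _ _ e).
  by move=> e; apply: h2; exact: (@prot_inj phi _ _ e).
- apply: rotL_all => r Lr; have [h1 h2] := H2 _ Lr; split; rewrite /rotL /=.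
    by change (L (rotr (- phi) (rotr phi ((rh_u r, rh_w' r), rh_w r)))); rewrite rotrK.
  change (L (rotr (- phi) ((rh_u' (rotr phi r), rh_w (rotr phi r)), rh_w' (rotr phi r)))); rewrite rh_u'_rotr.
  by change (L (rotr (- phi) (rotr phi ((rh_u' r, rh_w r), rh_w' r)))); rewrite rotrK.
- split.
    apply/seteqP; split => // z [/primal_rotL h1 /dual_rotL h2].
    by have : (primal_v L `&` dual_v L) (prot (- phi) z) by [] ; rewrite H3a.
  move=> z; have [r [Lr h]] := H3b (prot (- phi) z).
  by exists (rotr phi r); split; [rewrite /rotL /= rotrK | rewrite hull_rotr].
- move=> r1 r2 z; apply: (@rotL_all phi L (fun r1 => _)) => {}r1 L1.
  apply: (@rotL_all phi L (fun r2 => _)) => {}r2 L2.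
  rewrite !int_rotr => i1 i2; apply: hull_rotr_eq; exact: H4 i1 i2.
- move=> r1 r2 v; apply: (@rotL_all phi L (fun r1 => _)) => {}r1 L1.
  apply: (@rotL_all phi L (fun r2 => _)) => {}r2 L2.
  rewrite verts_rotr hull_rotr verts_rotr => h1 h2; exact: H5 h1 h2.
Qed.

Lemma angles_rotL phi eta L : angles_bounded eta L -> angles_bounded eta (rotL phi L).
Proof. by move=> h r Lr; rewrite -(rotrKV phi r) half_angle_rotr; exact: h. Qed.


Definition sw r : rhomb R := ((rh_u r, rh_w' r), rh_w r).
Definition fl r : rhomb R := ((rh_u' r, rh_w r), rh_w' r).
Definition nrm r : rhomb R :=
  let r1 := if plex (rh_u r) (rh_u' r) then r else fl r in
  if plex (rh_w r1) (rh_w' r1) then r1 else sw r1.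
Definition distinct r := rh_w r <> rh_w' r /\ rh_u r <> rh_u' r.
Definition good (L : set (rhomb R)) :=
  forall r, L r -> [/\ distinct r, L (sw r) & L (fl r)].

Lemma good_iso delta L : isoradial delta L -> good L.
Proof. by case=> H1 H2 _ _ _ r Lr; have [_ [_ h]] := H1 _ Lr; have [h1 h2] := H2 _ Lr. Qed.

Lemma plex_total a b : a <> b -> plex a b || plex b a.
Proof.
case: a b => [x1 y1] [x2 y2]; rewrite /plex /= => ne.
have [h|h|h] := ltgtP x1 x2; rewrite ?orbT //=.
subst x2; rewrite ?eqxx /=; have [h'|h'|h'] := ltgtP y1 y2; rewrite ?orbT //.
by subst.
Qed.
Arguments plex_total {a b}.
Lemma plex_asym a b : plex a b -> ~~ plex b a.
Proof.
case: a b => [x1 y1] [x2 y2]; rewrite /plex /=.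
case/orP => [h|/andP[/eqP e h]].
  by rewrite negb_or (lt_gtF h) /= negb_and (gt_eqF h).
by subst; rewrite ltxx eqxx /= (lt_gtF h).
Qed.

Arguments plex_asym {a b}.
Lemma pair_eq (a b : pt R) : a.1 = b.1 -> a.2 = b.2 -> a = b.
Proof. by case: a b => ? ? [? ?] /= -> ->. Qed.

Lemma u'_sw r : rh_u' (sw r) = rh_u' r.
Proof. by rewrite /rh_u' /sw /rh_w /rh_w' /padd /psub /=; apply: pair_eq => /=; ring. Qed.
Lemma u'_fl r : rh_u' (fl r) = rh_u r.
Proof. by rewrite /rh_u' /fl /rh_w /rh_w' /rh_u /padd /psub /=; apply: pair_eq => /=; ring. Qed.
Lemma flK r : fl (fl r) = r.
Proof. by rewrite {1}/fl u'_fl; case: r => [[]]. Qed.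
Lemma swK r : sw (sw r) = r.
Proof. by case: r => [[]]. Qed.
Lemma fl_sw r : fl (sw r) = sw (fl r).
Proof. by rewrite /fl u'_sw. Qed.
Lemma rotr_sw phi r : rotr phi (sw r) = sw (rotr phi r).
Proof. by []. Qed.
Lemma rotr_fl phi r : rotr phi (fl r) = fl (rotr phi r).
Proof. by rewrite /fl rh_u'_rotr. Qed.

Lemma distinct_sw r : distinct r -> distinct (sw r).
Proof. by case=> h1 h2; split; [move=> e; apply: h1 | rewrite u'_sw]. Qed.
Lemma distinct_fl r : distinct r -> distinct (fl r).
Proof. by case=> h1 h2; split; [ | rewrite u'_fl => e; apply: h2]. Qed.
Lemma distinct_rotr phi r : distinct r -> distinct (rotr phi r).
Proof.
case=> h1 h2; split; rewrite ?rh_u'_rotr => e; [apply: h1 | apply: h2];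
  exact: (@prot_inj phi _ _ e).
Qed.

Lemma wsw r : rh_w (sw r) = rh_w' r. Proof. by []. Qed.
Lemma w'sw r : rh_w' (sw r) = rh_w r. Proof. by []. Qed.
Lemma usw r : rh_u (sw r) = rh_u r. Proof. by []. Qed.
Lemma wfl r : rh_w (fl r) = rh_w r. Proof. by []. Qed.
Lemma w'fl r : rh_w' (fl r) = rh_w' r. Proof. by []. Qed.
Lemma ufl r : rh_u (fl r) = rh_u' r. Proof. by []. Qed.

Lemma nrm_sw r : distinct r -> nrm (sw r) = nrm r.
Proof.
case=> hw hu; rewrite /nrm u'_sw usw.
have [h|h] := orP (plex_total hw).
  by case: (plex (rh_u r) (rh_u' r)); rewrite ?wsw ?w'sw ?wfl ?w'fl (negbTE (plex_asym h)) h ?swK ?fl_sw ?swK.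
by case: (plex (rh_u r) (rh_u' r)); rewrite ?wsw ?w'sw ?wfl ?w'fl (negbTE (plex_asym h)) h ?swK ?fl_sw ?swK.
Qed.

Lemma nrm_fl r : distinct r -> nrm (fl r) = nrm r.
Proof.
case=> hw hu; rewrite /nrm u'_fl /= flK.
have := plex_total hu; case/orP => h.
  by rewrite (negbTE (plex_asym h)) h.
by rewrite h (negbTE (plex_asym h)).
Qed.

Lemma nrm_reps r : nrm r = r \/ nrm r = sw r \/ nrm r = fl r \/ nrm r = sw (fl r).
Proof. by rewrite /nrm; case: ifP => _; case: ifP => _; tauto. Qed.

Lemma nrm_canon r : distinct r -> plex (rh_u (nrm r)) (rh_u' (nrm r)) /\ plex (rh_w (nrm r)) (rh_w' (nrm r)).
Proof.
case=> hw hu; rewrite /nrm.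
case hU: (plex (rh_u r) (rh_u' r)).
  case hW: (plex (rh_w r) (rh_w' r)) => //.
  rewrite u'_sw usw wsw w'sw hU; split => //.
  by have := plex_total hw; rewrite hW.
have h1' : plex (rh_u' r) (rh_u r) by have := plex_total hu; rewrite hU.
rewrite wfl w'fl.
case hW: (plex (rh_w r) (rh_w' r)); first by rewrite u'_fl ufl wfl w'fl.
rewrite u'_sw u'_fl usw ufl wsw w'sw wfl w'fl; split => //.
by have := plex_total hw; rewrite hW.
Qed.

Lemma nrm_id r : plex (rh_u r) (rh_u' r) -> plex (rh_w r) (rh_w' r) -> nrm r = r.
Proof. by move=> h1 h2; rewrite /nrm h1 h2. Qed.

Lemma nrm_rotr_nrm phi x : distinct x -> nrm (rotr phi (nrm x)) = nrm (rotr phi x).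
Proof.
move=> dx; have dy := @distinct_rotr phi x dx.
have [->|[->|[->|->]]] := nrm_reps x => //.
- by rewrite rotr_sw nrm_sw.
- by rewrite rotr_fl nrm_fl.
- by rewrite rotr_sw rotr_fl nrm_sw ?nrm_fl //; exact: distinct_fl.
Qed.

Lemma inv_reps (P : rhomb R -> Prop) : (forall x, P (sw x) <-> P x) -> (forall x, P (fl x) <-> P x) ->
  forall x, P (nrm x) <-> P x.
Proof.
move=> hs hf x; have [->|[->|[->|->]]] := nrm_reps x => //.
by rewrite hs hf.
Qed.


Lemma nrm_F (T : Type) (F : rhomb R -> T) : (forall x, F (sw x) = F x) -> (forall x, F (fl x) = F x) ->
  forall x, F (nrm x) = F x.
Proof.
move=> hs hf x; have [->|[->|[->|->]]] := nrm_reps x => //.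
by rewrite hs hf.
Qed.

Lemma good_reps L x : good L -> L x -> L (nrm x) /\ distinct x.
Proof.
move=> g Lx; have [dx Ls Lf] := g _ Lx; split => //.
have [->|[->|[->|->]]] := nrm_reps x => //.
by have [] := g _ Lf.
Qed.

Arguments good_reps {L x}.
Arguments nrm_canon {r}.
Lemma rotL_rotL phi L : rotL (- phi) (rotL phi L) = L.
Proof. by apply/funext => r; rewrite /rotL /= opprK rotrK. Qed.

Lemma good_rotL phi L : good L -> good (rotL phi L).
Proof.
move=> g; apply: rotL_all => r Lr; have [d Ls Lf] := g _ Lr.
split; first exact: distinct_rotr.
  by rewrite -rotr_sw /rotL /= rotrK.
by rewrite -rotr_fl /rotL /= rotrK.
Qed.

Lemma bij_fun phi L (C C' : rhomb R -> Prop) : good L ->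
  (forall x, C' (sw x) <-> C' x) -> (forall x, C' (fl x) <-> C' x) ->
  (forall x, C' (rotr phi x) <-> C x) ->
  forall r, Defs.canon L r /\ C r -> Defs.canon (rotL phi L) (nrm (rotr phi r)) /\ C' (nrm (rotr phi r)).
Proof.
move=> g hs hf hr r [[Lr _] Cr].
have [dr _ _] := g _ Lr.
have Lr' : rotL phi L (rotr phi r) by rewrite /rotL /= rotrK.
have [L1 d1] := good_reps (@good_rotL phi L g) Lr'.
have [p1 p2] := nrm_canon d1.
split; first by split.
by apply/(@inv_reps C' hs hf); apply/hr.
Qed.

Lemma big_rot (F : rhomb R -> R) phi L (C C' : rhomb R -> Prop) :
  good L ->
  (forall x, C (sw x) <-> C x) -> (forall x, C (fl x) <-> C x) ->
  (forall x, C' (sw x) <-> C' x) -> (forall x, C' (fl x) <-> C' x) ->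
  (forall x, C' (rotr phi x) <-> C x) ->
  (forall x, F (sw x) = F x) -> (forall x, F (fl x) = F x) -> (forall x, F (rotr phi x) = F x) ->
  \big[*%R/1]_(r \in [set r | Defs.canon (rotL phi L) r /\ C' r]) F r =
  \big[*%R/1]_(r \in [set r | Defs.canon L r /\ C r]) F r.
Proof.
move=> g hs hf hs' hf' hr Fs Ff Fr.
have hr2 : forall x, C (rotr (- phi) x) <-> C' x.
  by move=> x; rewrite -hr rotrKV.
rewrite (reindex_fsbig (fun r => nrm (rotr phi r)) [set r | Defs.canon L r /\ C r]).
  by apply: eq_fsbigr => r _; rewrite (@nrm_F _ F Fs Ff) Fr.
split.
- by move=> r Pr; exact: bij_fun.
- move=> r1 r2; rewrite !in_setE => -[[L1 [p1 q1]] _] [[L2 [p2 q2]] _] e.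
  have [d1 _ _] := g _ L1; have [d2 _ _] := g _ L2.
  have := congr1 (fun x => nrm (rotr (- phi) x)) e => /=.
  rewrite !nrm_rotr_nrm; try exact: distinct_rotr.
  by rewrite !rotrK !nrm_id.
- move=> r Qr.
  have g' := @good_rotL phi L g.
  have := @bij_fun (- phi) (rotL phi L) C' C g' hs hf hr2 r Qr.
  rewrite rotL_rotL => Pr; exists (nrm (rotr (- phi) r)) => //.
  have [[Lr _] _] := Qr; have [dr _ _] := g' _ Lr.
  rewrite nrm_rotr_nrm; last exact: distinct_rotr.
  rewrite rotrKV nrm_id //; by case: Qr => [[_ []]].
Qed.


Lemma pdotC (a b : pt R) : pdot a b = pdot b a.
Proof. by rewrite /pdot; ring. Qed.

Lemma half_sw x : half_angle (sw x) = half_angle x.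
Proof. by rewrite /half_angle usw wsw w'sw pdotC [pnorm _ * _]mulrC. Qed.

Lemma half_fl x : half_angle (fl x) = half_angle x.
Proof.
rewrite /half_angle ufl wfl w'fl.
have e1 : pdot (psub (rh_w x) (rh_u' x)) (psub (rh_w' x) (rh_u' x)) =
          pdot (psub (rh_w x) (rh_u x)) (psub (rh_w' x) (rh_u x)).
  by rewrite /pdot /psub /rh_u' /padd /psub /=; ring.
have e2 : pnorm (psub (rh_w x) (rh_u' x)) = pnorm (psub (rh_w' x) (rh_u x)).
  by rewrite /pnorm /pdot /psub /rh_u' /padd /psub /=; congr Num.sqrt; ring.
have e3 : pnorm (psub (rh_w' x) (rh_u' x)) = pnorm (psub (rh_w x) (rh_u x)).
  by rewrite /pnorm /pdot /psub /rh_u' /padd /psub /=; congr Num.sqrt; ring.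
by rewrite e1 e2 e3 [pnorm _ * _]mulrC.
Qed.

Lemma mem_prot phi (S : {fset pt R}) z : (prot phi z \in (prot phi @` S)%fset) = (z \in S).
Proof. by rewrite mem_imfset //; exact: prot_inj. Qed.

Lemma Wplus_rot q phi L (S : {fset pt R}) : good L ->
  Wplus q (rotL phi L) (prot phi @` S)%fset = Wplus q L S.
Proof.
move=> g; rewrite /Wplus.
pose C := (fun r => (rh_w r \in S) != (rh_w' r \in S)).
pose C' := (fun r => (rh_w r \in (prot phi @` S)%fset) != (rh_w' r \in (prot phi @` S)%fset)).
have h1 : forall x, C (sw x) <-> C x by move=> x; rewrite /C wsw w'sw eq_sym.
have h2 : forall x, C (fl x) <-> C x by [].
have h3 : forall x, C' (sw x) <-> C' x by move=> x; rewrite /C' wsw w'sw eq_sym.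
have h4 : forall x, C' (fl x) <-> C' x by [].
have h5 : forall x, C' (rotr phi x) <-> C x by move=> x; rewrite /C /C' rh_w_rotr rh_w'_rotr !mem_prot.
have h6 : forall x, zweight q (half_angle (sw x)) = zweight q (half_angle x) by move=> x; rewrite half_sw.
have h7 : forall x, zweight q (half_angle (fl x)) = zweight q (half_angle x) by move=> x; rewrite half_fl.
have h8 : forall x, zweight q (half_angle (rotr phi x)) = zweight q (half_angle x) by move=> x; rewrite half_angle_rotr.
exact: (@big_rot (fun r => zweight q (half_angle r)) phi L C C' g h1 h2 h3 h4 h5 h6 h7 h8).
Qed.
Lemma Wfree_rot q phi L (D S : {fset pt R}) : good L ->
  Wfree q (rotL phi L) (prot phi @` D)%fset (prot phi @` S)%fset = Wfree q L D S.
Proof.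
move=> g; rewrite /Wfree.
pose C := (fun r => rh_u r \in D /\ rh_u' r \in D /\ ((rh_u r \in S) != (rh_u' r \in S))).
pose C' := (fun r => rh_u r \in (prot phi @` D)%fset /\ rh_u' r \in (prot phi @` D)%fset /\
     ((rh_u r \in (prot phi @` S)%fset) != (rh_u' r \in (prot phi @` S)%fset))).
have h1 : forall x, C (sw x) <-> C x by move=> x; rewrite /C usw u'_sw.
have h2 : forall x, C (fl x) <-> C x.
  by move=> x; rewrite /C ufl u'_fl [(rh_u' x \in S) == _]eq_sym; tauto.
have h3 : forall x, C' (sw x) <-> C' x by move=> x; rewrite /C' usw u'_sw.
have h4 : forall x, C' (fl x) <-> C' x.
  by move=> x; rewrite /C' ufl u'_fl [(rh_u' x \in _) == _]eq_sym; tauto.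
have h5 : forall x, C' (rotr phi x) <-> C x by move=> x; rewrite /C /C' rh_u_rotr rh_u'_rotr !mem_prot.
have h6 : forall x, zweight q (pi / 2 - half_angle (sw x)) = zweight q (pi / 2 - half_angle x) by move=> x; rewrite half_sw.
have h7 : forall x, zweight q (pi / 2 - half_angle (fl x)) = zweight q (pi / 2 - half_angle x) by move=> x; rewrite half_fl.
have h8 : forall x, zweight q (pi / 2 - half_angle (rotr phi x)) = zweight q (pi / 2 - half_angle x) by move=> x; rewrite half_angle_rotr.
exact: (@big_rot (fun r => zweight q (pi / 2 - half_angle r)) phi L C C' g h1 h2 h3 h4 h5 h6 h7 h8).
Qed.
Lemma fset_set_inf (A : set (pt R)) : ~ finite_set A -> fset_set A = fset0.
Proof. by rewrite /fset_set; case: pselect. Qed.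

Lemma image_protK phi (A : set (pt R)) : prot (- phi) @` (prot phi @` A) = A.
Proof.
apply/seteqP; split => z.
  by move=> [y [x Ax <-] <-]; rewrite protK.
by move=> Az; exists (prot phi z); [exists z | rewrite protK].
Qed.

Lemma fset_set_rot phi (A : set (pt R)) : fset_set (prot phi @` A) = (prot phi @` fset_set A)%fset.
Proof.
have [fA|nfA] := pselect (finite_set A); first exact: fset_set_image.
rewrite !fset_set_inf ?imfset0 // => fA'; apply: nfA.
by rewrite -(image_protK phi A); exact: finite_image.
Qed.

Lemma ballD_rot phi L N : ballD (rotL phi L) N = (prot phi @` ballD L N)%fset.
Proof.
rewrite /ballD -fset_set_rot; congr fset_set; apply/seteqP; split => z /=.
  move=> [/dual_rotL h1 h2]; exists (prot (- phi) z); last by rewrite protKV.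
  by split => //; rewrite pnorm_prot.
by move=> [y [h1 h2] <-]; split; [apply/dual_rotL; rewrite protK | rewrite pnorm_prot].
Qed.

Lemma ballP_rot phi L N : ballP (rotL phi L) N = (prot phi @` ballP L N)%fset.
Proof.
rewrite /ballP -fset_set_rot; congr fset_set; apply/seteqP; split => z /=.
  move=> [/primal_rotL h1 h2]; exists (prot (- phi) z); last by rewrite protKV.
  by split => //; rewrite pnorm_prot.
by move=> [y [h1 h2] <-]; split; [apply/primal_rotL; rewrite protK | rewrite pnorm_prot].
Qed.

Lemma imfset_prot_inj phi : injective (fun S : {fset pt R} => (prot phi @` S)%fset).
Proof. by move=> S1 S2 e; apply/fsetP => z; rewrite -(mem_prot phi S1) -(mem_prot phi S2) e. Qed.

Lemma fpowerset_rot phi (B : {fset pt R}) :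
  fpowerset (prot phi @` B)%fset = ((fun S : {fset pt R} => prot phi @` S)%fset @` fpowerset B)%fset.
Proof.
apply/fsetP => B'; rewrite fpowersetE; apply/idP/idP.
  move=> sub; apply/imfsetP; exists (prot (- phi) @` B')%fset.
    rewrite /= fpowersetE; apply/fsubsetP => x /imfsetP [y yB' ->].
    have := fsubsetP sub y yB'; case/imfsetP => b bB ->; by rewrite protK.
  by apply/fsetP => y; rewrite -{2}(protKV phi y) !mem_prot.
case/imfsetP => S /=; rewrite fpowersetE => sub ->.
apply/fsubsetP => x /imfsetP [y yS ->]; rewrite mem_prot; exact: (fsubsetP sub).
Qed.

Lemma sum_fpowerset_rot phi (B : {fset pt R}) (G : {fset pt R} -> R) :
  \sum_(S <- fpowerset (prot phi @` B)%fset) G S = \sum_(S <- fpowerset B) G (prot phi @` S)%fset.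
Proof.
rewrite fpowerset_rot big_imfset /=; last by move=> S1 S2 _ _; exact: imfset_prot_inj.
by apply: perm_big; apply: uniq_perm => //; apply: fset_uniq.
Qed.

Lemma spin_rot phi (S : {fset pt R}) x : spin (prot phi @` S)%fset (prot phi x) = spin S x.
Proof. by rewrite /spin mem_prot. Qed.

Lemma Eplus_rot q phi L xs : good L ->
  Eplus q (rotL phi L) (map (prot phi) xs) = Eplus q L xs.
Proof.
move=> g; rewrite /Eplus.
have -> : (fun N : nat => Eplus_fin q (rotL phi L) N%:R (map (prot phi) xs)) =
          (fun N : nat => Eplus_fin q L N%:R xs); last by [].
apply/funext => N.
rewrite /Eplus_fin ballD_rot !sum_fpowerset_rot.
congr (_ / _); apply: eq_bigr => S _; rewrite Wplus_rot //.
by rewrite big_map; congr (_ * _); apply: eq_bigr => x _; rewrite spin_rot.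
Qed.

Lemma Efree_rot q phi L xs : good L ->
  Efree q (rotL phi L) (map (prot phi) xs) = Efree q L xs.
Proof.
move=> g; rewrite /Efree.
have -> : (fun N : nat => Efree_fin q (rotL phi L) N%:R (map (prot phi) xs)) =
          (fun N : nat => Efree_fin q L N%:R xs); last by [].
apply/funext => N.
rewrite /Efree_fin ballP_rot !sum_fpowerset_rot.
congr (_ / _); apply: eq_bigr => S _; rewrite Wfree_rot //.
by rewrite big_map; congr (_ * _); apply: eq_bigr => x _; rewrite spin_rot.
Qed.

End Rot.

Section Sq.
Variable R : realType.
Variable d : R.
Hypothesis d_gt0 : 0 < d.

Definition b2r (e : bool) : R := (e : nat)%:R.
Definition E (a b : int) (e1 e2 : bool) : pt R := (d * (a%:~R + b2r e1), d * (b%:~R + b2r e2)).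
Definition rep a b x y (c : bool) : rhomb R :=
  if c then ((E a b x y, E a b x (~~ y)), E a b (~~ x) y)
  else ((E a b x y, E a b (~~ x) y), E a b x (~~ y)).
Definition even (k : int) := exists j : int, k = 2 * j.
Definition sq : set (rhomb R) :=
  [set r | exists (a b : int) (x y c : bool), even (a + b + (x : nat)%:Z + (y : nat)%:Z) /\ r = rep a b x y c].

Lemma b2r1 : b2r true = 1. Proof. by []. Qed.
Lemma b2r0 : b2r false = 0. Proof. by []. Qed.

Lemma b2rN e : b2r (~~ e) = 1 - b2r e.
Proof. by case: e; rewrite /b2r /=; ring. Qed.

Lemma b2rz (a : int) (e : bool) : (a + (e : nat)%:Z)%:~R = a%:~R + b2r e :> R.
Proof. by rewrite intrD. Qed.

Lemma u'_rep a b x y c : rh_u' (rep a b x y c) = E a b (~~ x) (~~ y).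
Proof.
by case: c; rewrite /rh_u' /rep /rh_u /rh_w /rh_w' /E /padd /psub /=; congr pair; ring.
Qed.

Lemma pair_eq' (p q : pt R) : p.1 = q.1 -> p.2 = q.2 -> p = q.
Proof. by case: p q => ? ? [? ?] /= -> ->. Qed.

Lemma seg (A : R) (X : bool) v :
  (exists s, 0 <= s <= 1 /\ v = d * (A + b2r X) + s * (d * (A + b2r (~~ X)) - d * (A + b2r X)))
  <-> d * A <= v <= d * (A + 1).
Proof.
have d0 : d != 0 by rewrite gt_eqF.
have dp := d_gt0.
split.
  case: X => -[s [/andP[h0 h1] ->]]; rewrite /= ?b2r1 ?b2r0; apply/andP; split; nra.
move=> /andP[h0 h1]; case: X.
  exists ((d * (A + 1) - v) / d).
  have e : (d * (A + 1) - v) / d * d = d * (A + 1) - v by rewrite divfK.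
  split; first by apply/andP; split; nra.
  have -> : forall s, s * (d * (A + b2r (~~ true)) - d * (A + b2r true)) = - (s * d).
    by move=> s; rewrite /= ?b2r1 ?b2r0; ring.
  by rewrite e /= ?b2r1 ?b2r0; ring.
exists ((v - d * A) / d).
have e : (v - d * A) / d * d = v - d * A by rewrite divfK.
split; first by apply/andP; split; nra.
have -> : forall s, s * (d * (A + b2r (~~ false)) - d * (A + b2r false)) = s * d.
  by move=> s; rewrite /= ?b2r1 ?b2r0; ring.
by rewrite e /= ?b2r1 ?b2r0; ring.
Qed.

Lemma segi (A : R) (X : bool) v :
  (exists s, 0 < s < 1 /\ v = d * (A + b2r X) + s * (d * (A + b2r (~~ X)) - d * (A + b2r X)))
  -> d * A < v < d * (A + 1).
Proof.
by have dp := d_gt0; case: X => -[s [/andP[h0 h1] ->]]; rewrite /= ?b2r1 ?b2r0; apply/andP; split; nra.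
Qed.

Definition box (a b : int) (z : pt R) :=
  (d * a%:~R <= z.1 <= d * (a%:~R + 1)) /\ (d * b%:~R <= z.2 <= d * (b%:~R + 1)).

Lemma hull_rep a b x y c z : rh_hull (rep a b x y c) z <-> box a b z.
Proof.
rewrite /rh_hull /box; case: c; rewrite /rep /rh_u /rh_w /rh_w' /E /padd /pscale /psub /=; split.
- move=> [s [t [hs [ht ->]]]] /=; split.
    by apply/(seg _ x _).1; exists t; split => //; ring.
  by apply/(seg _ y _).1; exists s; split => //; ring.
- move=> [/(seg _ x _).2 [t [ht e1]] /(seg _ y _).2 [s [hs e2]]]; exists s, t; split => //; split => //.
  by apply: pair_eq' => /=; rewrite ?e1 ?e2; ring.
- move=> [s [t [hs [ht ->]]]] /=; split.
    by apply/(seg _ x _).1; exists s; split => //; ring.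
  by apply/(seg _ y _).1; exists t; split => //; ring.
- move=> [/(seg _ x _).2 [s [hs e1]] /(seg _ y _).2 [t [ht e2]]]; exists s, t; split => //; split => //.
  by apply: pair_eq' => /=; rewrite ?e1 ?e2; ring.
Qed.

Lemma int_rep a b x y c z : rh_int (rep a b x y c) z ->
  (d * a%:~R < z.1 < d * (a%:~R + 1)) /\ (d * b%:~R < z.2 < d * (b%:~R + 1)).
Proof.
rewrite /rh_int; case: c; rewrite /rep /rh_u /rh_w /rh_w' /E /padd /pscale /psub /=.
- move=> [s [t [hs [ht ->]]]] /=; split.
    by apply: (segi _ x _); exists t; split => //; ring.
  by apply: (segi _ y _); exists s; split => //; ring.
- move=> [s [t [hs [ht ->]]]] /=; split.
    by apply: (segi _ x _); exists s; split => //; ring.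
  by apply: (segi _ y _); exists t; split => //; ring.
Qed.

Lemma dist_E1 a b x y : pdist (E a b x (~~ y)) (E a b x y) = d.
Proof.
rewrite -[RHS](ger0_norm (ltW d_gt0)) -sqrtr_sqr /pdist /pnorm /pdot /psub /E /=.
by congr Num.sqrt; case: y; rewrite /= ?b2r1 ?b2r0; ring.
Qed.
Lemma dist_E2 a b x y : pdist (E a b (~~ x) y) (E a b x y) = d.
Proof.
rewrite -[RHS](ger0_norm (ltW d_gt0)) -sqrtr_sqr /pdist /pnorm /pdot /psub /E /=.
by congr Num.sqrt; case: x; rewrite /= ?b2r1 ?b2r0; ring.
Qed.

Lemma E_inj a1 b1 e1 e2 a2 b2 f1 f2 : E a1 b1 e1 e2 = E a2 b2 f1 f2 ->
  a1 + (e1 : nat)%:Z = a2 + (f1 : nat)%:Z /\ b1 + (e2 : nat)%:Z = b2 + (f2 : nat)%:Z.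
Proof.
have d0 : d != 0 by rewrite gt_eqF.
case => /(mulfI d0) h1 /(mulfI d0) h2.
by split; apply: (@intr_inj R); rewrite !b2rz.
Qed.

Lemma E_ne1 a b x y : E a b x (~~ y) <> E a b (~~ x) y.
Proof. by move/E_inj => [h _]; case: x h => /=; lia. Qed.
Lemma E_ne2 a b x y : E a b x y <> E a b (~~ x) (~~ y).
Proof. by move/E_inj => [h _]; case: x h => /=; lia. Qed.

Lemma sw_rep a b x y c : sw (rep a b x y c) = rep a b x y (~~ c).
Proof. by case: c. Qed.
Lemma fl_rep a b x y c : fl (rep a b x y c) = rep a b (~~ x) (~~ y) (~~ c).
Proof. by rewrite /fl u'_rep; case: c; rewrite /rep !negbK. Qed.

Lemma even_flip (a b : int) (x y : bool) : even (a + b + (x : nat)%:Z + (y : nat)%:Z) ->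
  even (a + b + (~~ x : nat)%:Z + (~~ y : nat)%:Z).
Proof.
case: x; case: y => /= -[k hk]; [exists (k - 1) | exists k | exists k | exists (k + 1)]; lia.
Qed.

Lemma E_eq_int (a1 b1 : int) (e1 e2 : bool) (a2 b2 : int) (f1 f2 : bool) :
  a1 + (e1 : nat)%:Z = a2 + (f1 : nat)%:Z -> b1 + (e2 : nat)%:Z = b2 + (f2 : nat)%:Z ->
  E a1 b1 e1 e2 = E a2 b2 f1 f2.
Proof. by move=> h1 h2; rewrite /E -!b2rz h1 h2. Qed.

Lemma verts_rep a b x y c v : rh_verts (rep a b x y c) v <-> exists e1 e2, v = E a b e1 e2.
Proof.
rewrite /rh_verts u'_rep; split.
  by case: c => /= -[[[->|->]|->]|->]; do 2 eexists.
move=> [e1 [e2 ->]].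
have [h1|h1] : e1 = x \/ e1 = ~~ x by case: e1; case: x; auto.
all: have [h2|h2] : e2 = y \/ e2 = ~~ y by case: e2; case: y; auto.
all: subst; case: c => /=; tauto.
Qed.

Lemma int_bounds (a1 a2 : int) (v : R) : d * a2%:~R <= d * v -> d * v <= d * (a2%:~R + 1) ->
  v = a1%:~R -> a2 <= a1 <= a2 + 1.
Proof.
have dp := d_gt0.
move=> h1 h2 e; rewrite e in h1 h2.
have h1' : (a2%:~R : R) <= a1%:~R by nra.
have h2' : (a1%:~R : R) <= (a2 + 1)%:~R by rewrite intrD mulr1z; nra.
by rewrite ler_int in h1'; rewrite ler_int in h2'; rewrite h1' h2'.
Qed.

Lemma box_corner (a1 b1 : int) (e1 e2 : bool) (a2 b2 : int) : box a2 b2 (E a1 b1 e1 e2) -> exists f1 f2, E a1 b1 e1 e2 = E a2 b2 f1 f2.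
Proof.
rewrite /box /E /= => -[/andP[h1 h2] /andP[h3 h4]].
have /andP[k1 k2] := @int_bounds (a1 + (e1 : nat)%:Z) a2 _ h1 h2 (esym (b2rz a1 e1)).
have /andP[k3 k4] := @int_bounds (b1 + (e2 : nat)%:Z) b2 _ h3 h4 (esym (b2rz b1 e2)).
exists (a1 + (e1 : nat)%:Z == a2 + 1), (b1 + (e2 : nat)%:Z == b2 + 1).
apply: E_eq_int.
  by case: eqP => /= h; lia.
by case: eqP => /= h; lia.
Qed.

Lemma floor_box (v : R) : d * (Num.floor (v / d))%:~R <= v <= d * ((Num.floor (v / d))%:~R + 1).
Proof.
have dp := d_gt0; have d0 : d != 0 by rewrite gt_eqF.
have /andP[h1 h2] := floor_itv (v / d).
rewrite intrD mulr1z in h2.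
have e : v / d * d = v by rewrite divfK.
by apply/andP; split; nra.
Qed.

Lemma parity_choice (k : int) : exists x : bool, even (k + (x : nat)%:Z).
Proof.
have hm := divz_eq k 2.
have h0 : 0 <= (k %% 2)%Z by apply: modz_ge0.
have h1 : (k %% 2 < 2)%Z by apply: ltz_pmod.
have [e|ne] := eqVneq (k %% 2)%Z 1.
  by exists true; exists ((k %/ 2)%Z + 1) => /=; lia.
by exists false; exists (k %/ 2)%Z => /=; lia.
Qed.

Lemma sq_iso : isoradial d sq.
Proof.
have dp := d_gt0.
split.
- move=> r [a [b [x [y [c [_ ->]]]]]]; rewrite u'_rep; split; last split; last split.
  + by case: c; rewrite /rep /rh_w /rh_u /=; [exact: dist_E1 | exact: dist_E2].
  + by case: c; rewrite /rep /rh_w' /rh_u /=; [exact: dist_E2 | exact: dist_E1].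
  + case: c; rewrite /rep /rh_w' /rh_w /=; first exact: E_ne1.
    by move=> e; apply: (@E_ne1 a b x y); rewrite e.
  + by case: c; exact: E_ne2.
- move=> r [a [b [x [y [c [ev ->]]]]]]; split.
    by exists a, b, x, y, (~~ c); split => //; exact: sw_rep.
  by exists a, b, (~~ x), (~~ y), (~~ c); split; [exact: even_flip | exact: fl_rep].
- split.
    apply/seteqP; split => // z [[r1 [[a1 [b1 [x1 [y1 [c1 [[k1 ev1] ->]]]]]] h1]]
                                 [r2 [[a2 [b2 [x2 [y2 [c2 [[k2 ev2] ->]]]]]] h2]]].
    move: h1 h2; rewrite /rep; case: c1; case: c2; rewrite /rh_u /rh_w /= => <- /E_inj [];
      case: x1 ev1; case: y1; case: x2 ev2; case: y2 => /= ev2 ev1; lia.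
  move=> z.
  pose a := Num.floor (z.1 / d); pose b := Num.floor (z.2 / d).
  have [x ev] := parity_choice (a + b).
  exists (rep a b x false false); split.
    by exists a, b, x, false, false; split => //=; rewrite addr0.
  by apply/hull_rep; split; apply: floor_box.
- move=> r1 r2 z [a1 [b1 [x1 [y1 [c1 [_ ->]]]]]] [a2 [b2 [x2 [y2 [c2 [_ ->]]]]]].
  move=> /int_rep [/andP[i1 i2] /andP[i3 i4]] /int_rep [/andP[j1 j2] /andP[j3 j4]].
  have ha : a1 = a2.
    have k1 : (a1%:~R : R) < (a2 + 1)%:~R by rewrite intrD mulr1z; nra.
    have k2 : (a2%:~R : R) < (a1 + 1)%:~R by rewrite intrD mulr1z; nra.
    rewrite ltr_int in k1; rewrite ltr_int in k2; lia.
  have hb : b1 = b2.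
    have k1 : (b1%:~R : R) < (b2 + 1)%:~R by rewrite intrD mulr1z; nra.
    have k2 : (b2%:~R : R) < (b1 + 1)%:~R by rewrite intrD mulr1z; nra.
    rewrite ltr_int in k1; rewrite ltr_int in k2; lia.
  subst; apply/funext => w; apply/propext; split => /hull_rep h; exact/hull_rep.
- move=> r1 r2 v [a1 [b1 [x1 [y1 [c1 [_ ->]]]]]] [a2 [b2 [x2 [y2 [c2 [_ ->]]]]]].
  move=> /verts_rep [e1 [e2 ->]] /hull_rep /box_corner [f1 [f2 ->]].
  by apply/verts_rep; exists f1, f2.
Qed.

Lemma half_rep a b x y c : half_angle (rep a b x y c) = pi / 4.
Proof.
rewrite /half_angle.
have -> : pdot (psub (rh_w (rep a b x y c)) (rh_u (rep a b x y c)))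
               (psub (rh_w' (rep a b x y c)) (rh_u (rep a b x y c))) = 0.
  by case: c; rewrite /pdot /psub /rep /E /rh_w /rh_w' /rh_u /=; ring.
by rewrite mul0r acos0; field.
Qed.

Lemma sq_angles eta : 0 < eta < pi / 4 -> angles_bounded eta sq.
Proof.
move=> /andP[h1 h2] r [a [b [x [y [c [_ ->]]]]]]; rewrite half_rep.
have hp := pi_gt0 R.
apply/andP; split; lra.
Qed.

Lemma corner (s t : R) (par : bool) : 0 <= s <= 1 -> 0 <= t <= 1 ->
  exists e1 e2 : bool, (e1 (+) e2) = par /\ (b2r e1 - s) ^+ 2 + (b2r e2 - t) ^+ 2 <= 1.
Proof.
move=> /andP[s0 s1] /andP[t0 t1]; case: par.
  have [h|h] := lerP t s.
    by exists true, false; split => //; rewrite b2r1 b2r0; nra.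
  by exists false, true; split => //; rewrite b2r1 b2r0; nra.
have [h|h] := lerP (s + t) 1.
  by exists false, false; split => //; rewrite b2r0; nra.
by exists true, true; split => //; rewrite b2r1; nra.
Qed.

Lemma near_corner (z : pt R) (par : bool) : exists (a b : int) (e1 e2 : bool),
  (exists x : bool, even (a + b + (x : nat)%:Z) /\ (e1 (+) e2) = (x (+) par)) /\ pdist (E a b e1 e2) z <= d.
Proof.
have dp := d_gt0; have d0 : d != 0 by rewrite gt_eqF.
pose a := Num.floor (z.1 / d); pose b := Num.floor (z.2 / d).
have [x ev] := parity_choice (a + b).
pose s := z.1 / d - a%:~R; pose t := z.2 / d - b%:~R.
have /andP[ha1 ha2] := floor_itv (z.1 / d).
have /andP[hb1 hb2] := floor_itv (z.2 / d).
rewrite intrD mulr1z in ha2; rewrite intrD mulr1z in hb2.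
have hs : 0 <= s <= 1 by rewrite /s; apply/andP; split; lra.
have ht : 0 <= t <= 1 by rewrite /t; apply/andP; split; lra.
have [e1 [e2 [he hd]]] := @corner s t (x (+) par) hs ht.
exists a, b, e1, e2; split; first by exists x.
have ez1 : z.1 = d * (a%:~R + s) by rewrite /s addrCA subrr addr0 mulrC divfK.
have ez2 : z.2 = d * (b%:~R + t) by rewrite /t addrCA subrr addr0 mulrC divfK.
rewrite /pdist /pnorm /pdot /psub /E /= ez1 ez2.
rewrite -[X in _ <= X](ger0_norm (ltW dp)) -sqrtr_sqr ler_sqrt ?sqr_ge0 //.
have -> : (d * (a%:~R + b2r e1) - d * (a%:~R + s)) * (d * (a%:~R + b2r e1) - d * (a%:~R + s)) +
   (d * (b%:~R + b2r e2) - d * (b%:~R + t)) * (d * (b%:~R + b2r e2) - d * (b%:~R + t)) =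
   d ^+ 2 * ((b2r e1 - s) ^+ 2 + (b2r e2 - t) ^+ 2) by ring.
by rewrite -[X in _ <= X]mulr1; apply: ler_wpM2l; rewrite ?sqr_ge0.
Qed.

Lemma near_dual (z : pt R) : exists w, dual_v sq w /\ pdist w z <= d.
Proof.
have [a [b [e1 [e2 [[x [[k ev] hp]] hd]]]]] := near_corner z true.
exists (E a b e1 e2); split => //.
exists (rep a b e1 (~~ e2) true); split; last by rewrite /rep /rh_w /= negbK.
exists a, b, e1, (~~ e2), true; split => //.
clear hd; move: hp ev; case: x; case: e1; case: e2 => //= _ ev;
  first [exists k; lia | exists (k + 1); lia | exists (k - 1); lia].
Qed.

Lemma near_primal (z : pt R) : exists w, primal_v sq w /\ pdist w z <= d.
Proof.
have [a [b [e1 [e2 [[x [[k ev] hp]] hd]]]]] := near_corner z false.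
exists (E a b e1 e2); split => //.
exists (rep a b e1 e2 true); split => //.
exists a, b, e1, e2, true; split => //.
clear hd; move: hp ev; case: x; case: e1; case: e2 => //= _ ev;
  first [exists k; lia | exists (k + 1); lia | exists (k - 1); lia].
Qed.

End Sq.

Theorem corollary1p2 (R : realType) (n : nat) (m : R)
  (fplus ffree : ('I_n -> pt R) -> R) :
  (2 <= n)%N -> m < 0 ->
  is_scaling_plus m fplus -> is_scaling_free (- m) ffree ->
  forall (phi : R) (a : 'I_n -> pt R), injective a ->
    Cconst R ^+ n * fplus (fun i => prot phi (a i)) = Cconst R ^+ n * fplus a /\
    Cconst R ^+ n * ffree (fun i => prot phi (a i)) = Cconst R ^+ n * ffree a.
Proof.
move=> _ _ hplus hfree phi a ainj.
pose pos := fun dl : R => if 0 < dl then dl else 1.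
have pos_gt0 : forall dl, 0 < pos dl by move=> dl; rewrite /pos; case: ifP.
have posE : forall dl, 0 < dl -> pos dl = dl by move=> dl h; rewrite /pos h.
pose Lam := fun dl : R => sq R (pos dl).
have Lgood : forall dl, good (Lam dl).
  by move=> dl; apply: (@good_iso R (pos dl)); apply: sq_iso; exact: pos_gt0.
have hp := pi_gt0 R.
pose eta : R := pi / 8.
have heta : 0 < eta < pi / 4 by apply/andP; split; rewrite /eta; lra.
have HL : forall dl, 0 < dl -> isoradial dl (Lam dl) /\ angles_bounded eta (Lam dl).
  by move=> dl h; rewrite /Lam posE //; split; [apply: sq_iso | apply: sq_angles].
have HL' : forall dl, 0 < dl -> isoradial dl (rotL phi (Lam dl)) /\ angles_bounded eta (rotL phi (Lam dl)).
  by move=> dl h; have [h1 h2] := HL dl h; split; [apply: isoradial_rotL | apply: angles_rotL].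
have ainj' : injective (fun i => prot phi (a i)).
  by move=> i j e; apply: ainj; exact: (@prot_inj R phi _ _ e).
have hexw : forall p : R * 'I_n, exists w, 0 < p.1 -> dual_v (Lam p.1) w /\ pdist w (a p.2) <= p.1.
  move=> [dl i] /=; have [h|h] := ltP 0 dl; last by exists (a i).
  have [w [h1 h2]] := @near_dual R dl h (a i); exists w => _; split => //.
  by rewrite /Lam posE.
have hexv : forall p : R * 'I_n, exists w, 0 < p.1 -> primal_v (Lam p.1) w /\ pdist w (a p.2) <= p.1.
  move=> [dl i] /=; have [h|h] := ltP 0 dl; last by exists (a i).
  have [w [h1 h2]] := @near_primal R dl h (a i); exists w => _; split => //.
  by rewrite /Lam posE.
have [wf hwf] := boolp.choice hexw.
have [vf hvf] := boolp.choice hexv.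
split.
- pose w := fun dl i => wf (dl, i).
  have hw : forall dl i, 0 < dl -> dual_v (Lam dl) (w dl i) /\ pdist (w dl i) (a i) <= dl.
    by move=> dl i h; exact: (hwf (dl, i) h).
  have hw' : forall dl i, 0 < dl -> dual_v (rotL phi (Lam dl)) (prot phi (w dl i)) /\
                                  pdist (prot phi (w dl i)) (prot phi (a i)) <= dl.
    move=> dl i h; have [h1 h2] := hw dl i h; split; last by rewrite pdist_prot.
    by apply/dual_rotL; rewrite protK.
  have c1 := hplus eta heta Lam HL a ainj w hw.
  have c2 := hplus eta heta (fun dl => rotL phi (Lam dl)) HL' _ ainj' (fun dl i => prot phi (w dl i)) hw'.
  have e : (fun delta => delta `^ (- (n%:R / 8)) *
      Eplus (m * delta / 2) (rotL phi (Lam delta)) [seq prot phi (w delta i) | i <- enum 'I_n]) =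
      (fun delta => delta `^ (- (n%:R / 8)) *
      Eplus (m * delta / 2) (Lam delta) [seq w delta i | i <- enum 'I_n]).
    apply/funext => dl; rewrite (map_comp (prot phi) (w dl)) Eplus_rot //.
  rewrite e in c2.
  exact: (cvg_unique _ c2 c1).
- pose w := fun dl i => vf (dl, i).
  have hw : forall dl i, 0 < dl -> primal_v (Lam dl) (w dl i) /\ pdist (w dl i) (a i) <= dl.
    by move=> dl i h; exact: (hvf (dl, i) h).
  have hw' : forall dl i, 0 < dl -> primal_v (rotL phi (Lam dl)) (prot phi (w dl i)) /\
                                  pdist (prot phi (w dl i)) (prot phi (a i)) <= dl.
    move=> dl i h; have [h1 h2] := hw dl i h; split; last by rewrite pdist_prot.
    by apply/primal_rotL; rewrite protK.
  have c1 := hfree eta heta Lam HL a ainj w hw.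
  have c2 := hfree eta heta (fun dl => rotL phi (Lam dl)) HL' _ ainj' (fun dl i => prot phi (w dl i)) hw'.
  have e : (fun delta => delta `^ (- (n%:R / 8)) *
      Efree (- m * delta / 2) (rotL phi (Lam delta)) [seq prot phi (w delta i) | i <- enum 'I_n]) =
      (fun delta => delta `^ (- (n%:R / 8)) *
      Efree (- m * delta / 2) (Lam delta) [seq w delta i | i <- enum 'I_n]).
    apply/funext => dl; rewrite (map_comp (prot phi) (w dl)) Efree_rot //.
  rewrite e in c2.
  exact: (cvg_unique _ c2 c1).
Qed.
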